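(* Let $F[x,y]$ be a formula of ZF$\varepsilon$ with parameters, and let $G,U\in\Lambda$ satisfy $G\Vdash\forall x\,\neg\forall y\,\neg F[x,y]$ and $U\Vdash\forall f\,\neg\forall n^{\mathbb N}F[f[n],f[n+1]]$. Put $H=\Psi GU$. Let $a_0,\dots,a_k$ be a finite sequence of sets in the ground model $\mathcal M$ and $\phi\in\Lambda$ be such that $\phi\underline i\Vdash F[a_i,a_{i+1}]$ for every $i<k$. If $H\underline k\,\phi\not\Vdash\bot$, then there exist $\zeta\in\Lambda$ and a set $a_{k+1}$ in $\mathcal M$ such that $\zeta\Vdash F[a_k,a_{k+1}]$ and $(H\underline k^+)(\chi)\underline k\,\phi\,\zeta\not\Vdash\bot$, where $\underline k^+=(\sigma)\underline k$.
   Context: Fix an integer $N\ge 0$. The set $\Lambda$ of terms is the smallest set containing the constants $B,C,I,K,W,cc,A$ and $p,q_0,\dots,q_N$, closed under application $(\xi)\eta$ (written $\xi\eta$), and containing, for each sequence $(\xi_i)_{i\in\mathbb N}$ of closed terms (no occurrence of $p,q_0,\dots,q_N$), a constant $\bigwedge_i\xi_i$ (injectively, well-founded). Stacks: finite sequences $t_0\cdot\ldots\cdot t_{n-1}\cdot\pi_0$ of terms, $\pi_0$ the empty stack; $\Pi$ the set of stacks. $\ell_t=((C)(B)CB)t$, $k_{\pi_0}=A$, $k_{t\cdot\pi}=(\ell_t)k_\pi$; $\sigma=(BW)(C)(B)BB$, $\underline0=(K)I$, $\underline{n+1}=(\sigma)\underline n$. Execution $\succ$: least preorder on $\Lambda\times\Pi$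 with $(\xi)\eta\star\pi\succ\xi\star\eta\cdot\pi$; $B\star\xi\cdot\eta\cdot\zeta\cdot\pi\succ\xi\star(\eta)\zeta\cdot\pi$; $C\star\xi\cdot\eta\cdot\zeta\cdot\pi\succ\xi\star\zeta\cdot\eta\cdot\pi$; $I\star\xi\cdot\pi\succ\xi\star\pi$; $K\star\xi\cdot\eta\cdot\pi\succ\xi\star\pi$; $W\star\xi\cdot\eta\cdot\pi\succ\xi\star\eta\cdot\eta\cdot\pi$; $cc\star\xi\cdot\pi\succ\xi\star k_\pi\cdot\pi$; $A\star\xi\cdot\pi\succ\xi\star\pi_0$; $\bigwedge_i\xi_i\star\underline n\cdot\pi\succ\xi_n\star\pi$. Pole $\perp\!\!\!\perp=\{\xi\star\pi:\exists\varpi,\ \xi\star\pi\succ p\star\varpi\}$. $\lambda$-terms are translated into terms by the usual combinatory translation. Let $\mathbf0=\lambda x\lambda y\,y$, $\mathbf1=\lambda x\lambda y\,x$, $\mathsf a=\lambda x\lambda y\,yx$, $(i<k)=((k\mathsf a)\lambda d\,\mathbf0)(i\mathsf a)\lambda d\,\mathbf1$, $\chi=\lambda k\lambda f\lambda z\lambda i((i<k)(f)i)z$, $k^+=(\sigma)k$, $X=\lambda x\lambda f(f)(x)xf$, $Y=XX$, $\Psi=\lambda g\lambda u(Y)\lambda h\lambda k\lambda f(u)(\chi kf)(g)\lambda z(hk^+)(\chi)kfz$. Realizability is Krivine's classical realizability for ZF$\varepsilon$ over the ground model $\mathcal M$ of ZF: $\xi\Vdash F$ iff $\xi\star\pi\in\perp\!\!\!\perp$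 for all $\pi\in\|F\|$; $\|\bot\|=\Pi$, $\|A\to B\|=\{\eta\cdot\pi:\eta\Vdash A,\pi\in\|B\|\}$, $\|\forall xF[x]\|=\bigcup_a\|F[a]\|$, $\neg A$ is $A\to\bot$, $\|\forall n^{\mathbb N}F[n]\|=\{\underline n\cdot\pi:n\in\mathbb N,\pi\in\|F[n]\|\}$; $\xi\not\Vdash F$ means $\xi\Vdash F$ fails. $f[n]=\mathrm{app}(f,n)=\{y:(n,y)\in f\}$. *)

(* Defs.v *)
From mathcomp Require Import all_boot.
From Stdlib Require Import Relations.





(* Closed terms (no p, q_i) are the inductive [cterm]; the
   terms of Lambda are [term N].  The constant /\_i xi_i exists for every
   sequence of closed terms; it is (injectively, well-foundedly) a
   constructor.                                                          *)
Inductive cterm : Type :=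
| cB | cC | cI | cK | cW | ccc | cA
| capp of cterm & cterm
| cConj of (nat -> cterm).

Inductive term (N : nat) : Type :=
| tB | tC | tI | tK | tW | tcc | tA
| tp
| tq of 'I_N.+1
| tapp of term N & term N
| tConj of (nat -> cterm).

Arguments tB {N}. Arguments tC {N}. Arguments tI {N}. Arguments tK {N}.
Arguments tW {N}. Arguments tcc {N}. Arguments tA {N}. Arguments tp {N}.

Arguments tq {N}. Arguments tapp {N}.
Fixpoint emb (N : nat) (c : cterm) : term N :=
  match c with
  | cB => tB | cC => tC | cI => tI | cK => tK | cW => tW | ccc => tcc | cA => tA
  | capp u v => tapp (emb N u) (emb N v)
  | cConj xs => tConj N xs
  end.

(* stacks: finite sequences of terms, [::] is pi_0 *)
Definition stack (N : nat) := list (term N).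
Arguments emb {N}.

(* l_t = ((C)(B)CB)t = C ((B C) B) t *)
Definition ell (N : nat) (t : term N) : term N :=
  tapp (tapp tC (tapp (tapp tB tC) tB)) t.

Fixpoint kont (N : nat) (pi : stack N) : term N :=
  match pi with
  | [::] => tA
  | t :: pi' => tapp (ell N t) (kont N pi')
  end.

(* sigma = (BW)(C)(B)BB = (B W) (C ((B B) B)) *)
Definition sigmaT (N : nat) : term N :=
  tapp (tapp tB tW) (tapp tC (tapp (tapp tB tB) tB)).

Arguments ell {N}. Arguments kont {N}.
Fixpoint num (N : nat) (n : nat) : term N :=
  match n with
  | 0 => tapp tK tI
  | n'.+1 => tapp (sigmaT N) (num N n')
  end.

Inductive step (N : nat) : term N * stack N -> term N * stack N -> Prop :=
| st_push xi eta pi : step N (tapp xi eta, pi) (xi, eta :: pi)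
| st_B xi eta zeta pi : step N (tB, xi :: eta :: zeta :: pi) (xi, tapp eta zeta :: pi)
| st_C xi eta zeta pi : step N (tC, xi :: eta :: zeta :: pi) (xi, zeta :: eta :: pi)
| st_I xi pi : step N (tI, xi :: pi) (xi, pi)
| st_K xi eta pi : step N (tK, xi :: eta :: pi) (xi, pi)
| st_W xi eta pi : step N (tW, xi :: eta :: pi) (xi, eta :: eta :: pi)
| st_cc xi pi : step N (tcc, xi :: pi) (xi, kont pi :: pi)
| st_A xi pi : step N (tA, xi :: pi) (xi, [::])
| st_Conj xs n pi : step N (tConj N xs, num N n :: pi) (emb (xs n), pi).

Definition exec (N : nat) := clos_refl_trans (term N * stack N) (@step N).

Definition pole (N : nat) (xi : term N) (pi : stack N) : Prop :=
  exists varpi, exec N (xi, pi) (tp, varpi).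

Arguments pole {N}.
Definition fval (N : nat) := stack N -> Prop.

(* xi ||- F  with ||F|| = P *)
Definition realizes (N : nat) (xi : term N) (P : fval N) : Prop :=
  forall pi, P pi -> pole xi pi.

Arguments realizes {N}.
Definition fbot (N : nat) : fval N := fun _ => True.

Definition fimp (N : nat) (PA PB : fval N) : fval N :=
  fun s => exists eta pi, s = eta :: pi /\ realizes eta PA /\ PB pi.

Arguments fimp {N}.
Definition fneg (N : nat) (PA : fval N) : fval N := fimp PA (fbot N).
Arguments fneg {N}.

(* ||forall x F[x]|| = union over sets a of the ground model *)
Definition fall (N : nat) (V : Type) (P : V -> fval N) : fval N :=
  fun s => exists a, P a s.

Arguments fall {N V}.
Definition fallN (N : nat) (P : nat -> fval N) : fval N :=
  fun s => exists n pi, s = num N n :: pi /\ P n pi.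

Arguments fallN {N}.
Inductive lam (N : nat) : Type :=
| LV of nat
| LC of term N
| LA of lam N & lam N
| LL of nat & lam N.

Arguments LV {N}.

Inductive cexp (N : nat) : Type :=
| EV of nat
| EC of term N
| EA of cexp N & cexp N.

Arguments EV {N}. Arguments EC {N}. Arguments EA {N}. Arguments LC {N}. Arguments LA {N}. Arguments LL {N}.

Fixpoint occurs (N : nat) (x : nat) (e : cexp N) : bool :=
  match e with
  | EV y => y == x
  | EC _ => false
  | EA u v => occurs N x u || occurs N x v
  end.

Arguments occurs {N}.
Definition is_var (N : nat) (x : nat) (e : cexp N) : bool :=
  if e is EV y then y == x else false.

Arguments is_var {N}.
Fixpoint abs (N : nat) (x : nat) (e : cexp N) : cexp N :=
  if ~~ occurs x e then EA (EC tK) e else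
  match e with
  | EV _ => EC tI
  | EC c => EA (EC tK) (EC c)
  | EA t u =>
      if ~~ occurs x u then EA (EA (EC tC) (abs N x t)) u
      else if is_var x u && ~~ occurs x t then t
      else if ~~ occurs x t then EA (EA (EC tB) t) (abs N x u)
      else EA (EC tW) (EA (EA (EC tB) (EA (EA (EC tC) (EC tB)) (abs N x u))) (abs N x t))
  end.

Arguments abs {N}.
Fixpoint compile (N : nat) (l : lam N) : cexp N :=
  match l with
  | LV x => EV x
  | LC t => EC t
  | LA u v => EA (compile N u) (compile N v)
  | LL x u => abs x (compile N u)
  end.

(* closed combinatory expressions to terms (variables never occur for the
   closed lambda-terms used below; they are sent to I arbitrarily) *)
Arguments compile {N}.
Fixpoint cexp_term (N : nat) (e : cexp N) : term N :=
  match e with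
  | EV _ => tI
  | EC t => t
  | EA u v => tapp (cexp_term N u) (cexp_term N v)
  end.

Arguments cexp_term {N}.
Definition tr (N : nat) (l : lam N) : term N := cexp_term (compile l).

Arguments tr {N}.
Definition zeroT (N : nat) : term N := tr (LL 0 (LL 1 (LV 1))).
Definition oneT (N : nat) : term N := tr (LL 0 (LL 1 (LV 0))).
Definition aT (N : nat) : term N := tr (LL 0 (LL 1 (LA (LV 1) (LV 0)))).

Definition ltL (N : nat) (i k : lam N) : lam N :=
  LA (LA (LA k (LC (aT N))) (LL 100 (LC (zeroT N))))
     (LA (LA i (LC (aT N))) (LL 100 (LC (oneT N)))).

Arguments ltL {N}.
Definition chiT (N : nat) : term N :=
  tr (LL 0 (LL 1 (LL 2 (LL 3
        (LA (LA (ltL (LV 3) (LV 0)) (LA (LV 1) (LV 3))) (LV 2)))))).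

Definition XT (N : nat) : term N :=
  tr (LL 0 (LL 1 (LA (LV 1) (LA (LA (LV 0) (LV 0)) (LV 1))))).
Definition YT (N : nat) : term N := tapp (XT N) (XT N).

Definition PsiT (N : nat) : term N :=
  let g := LV 0 in let u := LV 1 in let h := LV 2 in
  let k := LV 3 in let f := LV 4 in let z := LV 5 in
  tr (LL 0 (LL 1 (LA (LC (YT N))
       (LL 2 (LL 3 (LL 4
          (LA u (LA (LA (LA (LC (chiT N)) k) f)
                    (LA g (LL 5 (LA (LA h (LA (LC (sigmaT N)) k))
                                    (LA (LA (LA (LC (chiT N)) k) f) z)))))))))))).

(* Main.v *)
Require Import Defs.
From mathcomp Require Import all_boot.
From Stdlib Require Import Relations.
Lemma ex_step N s t u : step N s t -> exec N t u -> exec N s u.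
Proof. intros; eapply rt_trans; [apply rt_step; eassumption| eassumption]. Qed.
Ltac run := repeat (eapply ex_step; [ (constructor) |]).

Lemma Loop N k : forall i (T y z : term N) pi,
  (forall X w, exec N (T, X::w) (num N i, tapp tC tI :: tapp tK tK :: X :: w)) ->
  exec N (num N k, tapp tC tI :: tapp tK (tapp tK tI) :: T :: y :: z :: pi)
    (if i < k then (y, pi) else (z, pi)).
Proof.
elim: k => [|k IH] i T y z pi HT.
- rewrite ltn0 /=. run. apply rt_refl.
- simpl. run. eapply rt_trans; [apply HT|].
  case: i HT => [|i] HT.
  + simpl. run. apply rt_refl.
  + simpl. run. rewrite ltnS. apply IH. intros. run. apply rt_refl.
Qed.


Definition Pc N : term N := tapp (tapp tB (tapp (tapp tC tB) tI)) tI.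
Definition Xc N : term N := tapp (tapp tB tW) (tapp (tapp tC (tapp (tapp tB tB) (tapp (tapp tB (tapp tC tB)) (tapp tW (tapp (tapp tB (tapp (tapp tC tB) tI)) tI))))) tI).
Definition Yh N (xi : term N) m := tapp (tapp (tapp tW (Pc N)) (iter m (tapp tI) (Xc N))) xi.

Arguments Yh {N}.
Ltac runto := repeat (first [apply rt_refl | eapply ex_step; [constructor|] ]).
Lemma iterI N m (X : term N) s : exec N (iter m (tapp tI) X, s) (X, s).
Proof. elim: m s => [|m IH] s /=. apply rt_refl. run. apply IH. Qed.

Lemma Yh_run N (xi : term N) m s : exec N (tapp (tapp tW (Pc N)) (iter m (tapp tI) (Xc N)), xi :: s) (xi, Yh xi m.+1 :: s).
Proof. unfold Pc. run. eapply rt_trans; [apply iterI|]. unfold Xc. run. apply rt_refl. Qed.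

Lemma key N (G U : term N) : exists xi M L : term N,
 (forall kap f pi, exec N (tapp (tapp (tapp (tapp (PsiT N) G) U) kap) f, pi) (xi, Yh xi 0 :: kap :: f :: pi)) /\
 (forall h kap f pi, exec N (xi, h :: kap :: f :: pi) (U, tapp (tapp (tapp M h) kap) f :: pi)) /\
 (forall h k f i pi, i < k -> exec N (tapp (tapp (tapp M h) (num N k)) f, num N i :: pi) (f, num N i :: pi)) /\
 (forall h k f i pi, k <= i -> exec N (tapp (tapp (tapp M h) (num N k)) f, num N i :: pi) (G, tapp (tapp (tapp L h) (num N k)) f :: pi)) /\
 (forall h k f z pi, exec N (tapp (tapp (tapp L h) (num N k)) f, z :: pi)
     (h, num N k.+1 :: tapp (tapp (tapp (chiT N) (num N k)) f) z :: pi)).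
Proof.
do 3 eexists. split.
{ intros. unfold PsiT, YT, XT, chiT, ltL, aT, zeroT, oneT, tr, Yh, Pc, Xc. simpl. runto. }
split.
{ intros. run. apply rt_refl. }
split.
{ intros h k f i pi Hik. run. eapply rt_trans; [apply (Loop _ k i)|].
  { intros. run. apply rt_refl. }
  rewrite Hik. run. apply rt_refl. }
split.
{ intros h k f i pi Hik. run. eapply rt_trans; [apply (Loop _ k i)|].
  { intros. run. apply rt_refl. }
  rewrite ltnNge Hik /=. run. apply rt_refl. }
{ intros. run. unfold PsiT, YT, XT, chiT, ltL, aT, zeroT, oneT, tr. simpl. apply rt_refl. }
Qed.
From Stdlib Require Lists.List.
Arguments Yh_run {N}.

Lemma num_inj N n m : num N n = num N m -> n = m.
Proof.
elim: n m => [|n IH] [|m] //= H; rewrite /sigmaT in H; try congruence.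
case: H => /IH ->. done.
Qed.

Lemma step_det N s t1 t2 : step N s t1 -> step N s t2 -> t1 = t2.
Proof.
move=> H1; inversion H1; subst => H2; inversion H2; subst; try reflexivity.
match goal with H : num N _ = num N _ |- _ => move/num_inj: H => -> end. done.
Qed.
Arguments step_det {N s t1 t2}.

Inductive stepsn N : nat -> term N * stack N -> term N * stack N -> Prop :=
| sn0 s : stepsn N 0 s s
| snS n s t u : step N s t -> stepsn N n t u -> stepsn N n.+1 s u.

Lemma stepsn_trans N n m s t u : stepsn N n s t -> stepsn N m t u -> stepsn N (n + m) s u.
Proof. elim=> [//|n' s' t' u' Hs _ IH] H. rewrite addSn. econstructor; eauto. Qed.
Arguments stepsn_trans {N n m s t u}.

Lemma exec_stepsn N s t : exec N s t -> exists n, stepsn N n s t.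
Proof.
elim=> [x y Hs|x|x y z _ [n Hn] _ [m Hm]].
- exists 1. econstructor; eauto. constructor.
- exists 0. constructor.
- exists (n + m). eapply stepsn_trans; eauto.
Qed.
Arguments exec_stepsn {N s t}.
Arguments stepsn_trans {N n m s t u}.

Lemma stepsn_exec N n s t : stepsn N n s t -> exec N s t.
Proof. elim=> [s'|n' s' t' u' Hs _ IH]. apply rt_refl. eapply rt_trans; [apply rt_step; eauto| eauto]. Qed.
Arguments stepsn_exec {N n s t}.

Lemma no_step_tp N w x : step N (tp, w) x -> False.
Proof. move=> H; inversion H. Qed.
Arguments no_step_tp {N w x}.

Lemma det_split N j s u : stepsn N j s u -> forall n w, stepsn N n s (tp, w) -> j <= n /\ stepsn N (n - j) u (tp, w).
Proof.
elim=> [s0 n w H|j' s0 t0 u0 Hs _ IH n w H]. by rewrite subn0.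
inversion H; subst. by case: (no_step_tp Hs).
have E := step_det Hs H0. subst.
have [H3 H4] := IH _ _ H1. by rewrite ltnS subSS.
Qed.
Arguments det_split {N j s u} _ {n w}.

Lemma pole_fwd N x p y q : exec N (x, p) (y, q) -> pole x p -> pole y q.
Proof.
move=> /exec_stepsn [j Hj] [w /exec_stepsn [n Hn]].
have [_ H] := det_split Hj Hn. exists w. exact: stepsn_exec H.
Qed.
Arguments pole_fwd {N x p y q}.

Lemma pole_bwd N x p y q : exec N (x, p) (y, q) -> pole y q -> pole x p.
Proof. move=> H [w Hw]. exists w. eapply rt_trans; eauto. Qed.
Arguments pole_bwd {N x p y q}.

Lemma Yh_full N (xi : term N) m s : exec N (Yh xi m, s) (xi, Yh xi m.+1 :: s).
Proof. eapply ex_step; [constructor|]. apply Yh_run. Qed.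
Arguments Yh_full {N}.

Definition isW3 N (t : term N) : bool :=
  match t with tapp (tapp (tapp tW _) _) _ => true | _ => false end.
Fixpoint yfree N (t : term N) : bool :=
  match t with tapp u v => ~~ isW3 N t && yfree N u && yfree N v | _ => true end.

Arguments isW3 {N}.
Arguments yfree {N}.
Inductive sim N (xi : term N) : term N -> term N -> Prop :=
| sim_h m n : sim N xi (Yh xi m) (Yh xi n)
| sim_app u u' v v' : sim N xi u u' -> sim N xi v v' -> sim N xi (tapp u v) (tapp u' v')
| sim_refl t : sim N xi t t.
Arguments sim {N}.

Arguments sim_refl {N xi t}.
Arguments sim_app {N xi u u' v v'}.
Arguments sim_h {N xi}.
Lemma sim_yfree N xi t t' : @sim N xi t t' -> yfree t -> t' = t.
Proof.
elim=> [m n|u u' v v' _ IHu _ IHv|t0] //=.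
move=> /andP [/andP [_ Hu] Hv]. by rewrite IHu // IHv.
Qed.
Arguments sim_yfree {N xi t t'}.

Lemma yfree_num N n : yfree (num N n).
Proof. elim: n => [|n IH] //=. Qed.

Lemma sim_kont N xi st st' : List.Forall2 (@sim N xi) st st' -> sim xi (kont st) (kont st').
Proof.
elim=> [|x y l l' Hxy _ IH] /=. apply sim_refl.
apply sim_app => //. apply sim_app => //. apply sim_refl.
Qed.
Arguments sim_kont {N xi st st'}.

Lemma sim_stepsn N xi n : forall t st t' st' w, @sim N xi t t' -> List.Forall2 (sim xi) st st' ->
  stepsn N n (t, st) (tp, w) -> pole t' st'.
Proof.
elim/ltn_ind: n => n IH t st t' st' w Hs Hst Hn.
case: Hs Hst Hn.
- move=> m m' Hst Hn.
  have /exec_stepsn [j Hj] := Yh_run xi m st.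
  have Hj' : stepsn N j.+1 (Yh xi m, st) (xi, Yh xi m.+1 :: st) by econstructor; [constructor|exact Hj].
  have [Hle Hr] := det_split Hj' Hn.
  apply: pole_bwd (Yh_full xi m' st') _.
  apply: (IH (n - j.+1) _ _ _ _ _ _ sim_refl _ Hr).
  + by rewrite ltn_subrL; case: n Hn Hle {IH Hj' Hr}.
  + by constructor => //; apply sim_h.
- move=> u u' v v' Hu Hv Hst Hn.
  inversion Hn as [|n1 s1 x1 u1 Hs1 Hr1]; subst. inversion Hs1; subst.
  apply: pole_bwd _ (IH n1 (ltnSn _) _ _ _ _ _ Hu (List.Forall2_cons _ _ Hv Hst) Hr1).
  apply rt_step; constructor.
- move=> t0 Hst Hn.
  inversion Hn as [|n1 s1 x1 u1 Hs1 H1]; subst. { exists st'. apply rt_refl. }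
  have IH' := IH n1 (ltnSn _).
  inversion Hs1; subst.
  + apply: pole_bwd _ (IH' _ _ _ _ _ sim_refl (List.Forall2_cons _ _ sim_refl Hst) H1).
    apply rt_step; constructor.
  + inversion Hst as [|? y1 ? r1 S1 Hst1]; subst. inversion Hst1 as [|? y2 ? r2 S2 Hst2]; subst.
    inversion Hst2 as [|? y3 ? r3 S3 Hst3]; subst.
    apply: pole_bwd _ (IH' _ _ _ _ _ S1 (List.Forall2_cons _ _ (sim_app S2 S3) Hst3) H1).
    apply rt_step; constructor.
  + inversion Hst as [|? y1 ? r1 S1 Hst1]; subst. inversion Hst1 as [|? y2 ? r2 S2 Hst2]; subst.
    inversion Hst2 as [|? y3 ? r3 S3 Hst3]; subst.
    apply: pole_bwd _ (IH' _ _ _ _ _ S1 (List.Forall2_cons _ _ S3 (List.Forall2_cons _ _ S2 Hst3)) H1).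
    apply rt_step; constructor.
  + inversion Hst as [|? y1 ? r1 S1 Hst1]; subst.
    apply: pole_bwd _ (IH' _ _ _ _ _ S1 Hst1 H1).
    apply rt_step; constructor.
  + inversion Hst as [|? y1 ? r1 S1 Hst1]; subst. inversion Hst1 as [|? y2 ? r2 S2 Hst2]; subst.
    apply: pole_bwd _ (IH' _ _ _ _ _ S1 Hst2 H1).
    apply rt_step; constructor.
  + inversion Hst as [|? y1 ? r1 S1 Hst1]; subst. inversion Hst1 as [|? y2 ? r2 S2 Hst2]; subst.
    apply: pole_bwd _ (IH' _ _ _ _ _ S1 (List.Forall2_cons _ _ S2 (List.Forall2_cons _ _ S2 Hst2)) H1).
    apply rt_step; constructor.
  + inversion Hst as [|? y1 ? r1 S1 Hst1]; subst.
    apply: pole_bwd _ (IH' _ _ _ _ _ S1 (List.Forall2_cons _ _ (sim_kont Hst1) Hst1) H1).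
    apply rt_step; constructor.
  + inversion Hst as [|? y1 ? r1 S1 Hst1]; subst.
    apply: pole_bwd _ (IH' _ _ _ _ _ S1 (List.Forall2_nil _) H1).
    apply rt_step; constructor.
  + inversion Hst as [|? y1 ? r1 S1 Hst1]; subst.
    rewrite (sim_yfree S1 (yfree_num _ _)).
    apply: pole_bwd _ (IH' _ _ _ _ _ sim_refl Hst1 H1).
    apply rt_step; constructor.
Qed.
Arguments sim_stepsn {N xi n t st t' st' w}.

Lemma sim_pole N xi t st t' st' : pole t st -> @sim N xi t t' -> List.Forall2 (sim xi) st st' -> pole t' st'.
Proof.
move=> [w /exec_stepsn [n Hn]] Hs Hst. exact: sim_stepsn Hs Hst Hn.
Qed.

From Stdlib Require Import Classical.
Arguments sim_pole {N xi t st t' st'}.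

Theorem lemma6 (N : nat) (V : Type) (app : V -> nat -> V)
  (hM : forall (s : nat -> V) (k : nat), exists f : V, forall n, app f n = s (minn n k))
  (FF : V -> V -> fval N) (G U : term N)
  (hG : realizes G (fall (fun x => fneg (fall (fun y => fneg (FF x y))))))
  (hU : realizes U (fall (fun f : V =>
          fneg (fallN (fun n => FF (app f n) (app f n.+1))))))
  (k : nat) (a : nat -> V) (phi : term N)
  (hphi : forall i, i < k -> realizes (tapp phi (num N i)) (FF (a i) (a i.+1))) :
  let H := tapp (tapp (PsiT N) G) U in
  ~ realizes (tapp (tapp H (num N k)) phi) (fbot N) ->
  exists (zeta : term N) (b : V),
    realizes zeta (FF (a k) b) /\
    ~ realizes (tapp (tapp H (tapp (sigmaT N) (num N k)))
                     (tapp (tapp (tapp (chiT N) (num N k)) phi) zeta)) (fbot N).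
Proof.
move=> H Hnot. apply: NNPP => C. apply: Hnot => pi0 _.
have [xi [M [L [K0 [K1 [K2 [K3 K4]]]]]]] := key N G U.
have [f hf] := hM a k.
set Lam := tapp (tapp (tapp L (Yh xi 0)) (num N k)) phi.
have HLam : realizes Lam (fall (fun y => fneg (FF (a k) y))).
{ move=> s [b [zeta [pi [-> [hz _]]]]].
  have hR : realizes (tapp (tapp H (num N k.+1)) (tapp (tapp (tapp (chiT N) (num N k)) phi) zeta)) (fbot N).
  { apply: NNPP => nr. apply: C. exists zeta, b. split => //. }
  have p1 := hR pi I.
  have p2 := pole_fwd (K0 _ _ _) p1.
  apply: pole_bwd (K4 _ _ _ _ _) _.
  apply: pole_bwd (Yh_full xi 0 _) _.
  apply: (sim_pole p2 sim_refl).
  constructor; first by apply sim_h.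
  constructor; first by apply sim_refl.
  constructor; first by apply sim_refl.
  elim: pi {p1 p2 hz} => [|x l IHl]; constructor => //; apply sim_refl. }
have GL : forall pi, pole G (Lam :: pi).
{ move=> pi. apply: hG. exists (a k), Lam, pi. by split. }
have HE : realizes (tapp (tapp (tapp M (Yh xi 0)) (num N k)) phi)
            (fallN (fun n => FF (app f n) (app f n.+1))).
{ move=> s [i [pi [-> hpi]]]. case: (ltnP i k) => hik.
  - apply: pole_bwd (K2 _ _ _ _ _ hik) _.
    rewrite !hf (minn_idPl (ltnW hik)) (minn_idPl hik) in hpi.
    have := hphi i hik pi hpi.
    apply: pole_fwd. apply rt_step; constructor.
  - apply: pole_bwd (K3 _ _ _ _ _ hik) _. exact: GL. }
apply: pole_bwd (K0 _ _ _) _.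
apply: pole_bwd (K1 _ _ _ _) _.
apply: hU. exists f, (tapp (tapp (tapp M (Yh xi 0)) (num N k)) phi), pi0. by split.
Qed.
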